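(* Let $d\ge1$ and $q\ge2$ even. There is no function $G:[0,\infty)\to\mathbb{R}$ satisfying $B_{d,0}(G)=b_d^{-1}$, $B_{d,i}(G)=0$ for $i\in\{2,4,\ldots,q-2\}$, $B_{d,q}(G)\neq0$, that minimizes $B_{d,q}(G)^{2(d+2)}\cdot V_{d,1}(G)^{2q}$ among all functions satisfying these moment conditions; i.e., this minimization problem has no solution.
   Context: For $G:[0,\infty)\to\mathbb{R}$: $B_{d,i}(G)=\int_0^\infty x^{d-1+i}G(x)\,dx$, $V_{d,1}(G)=\int_0^\infty x^{d-1}\{G^{(1)}(x)\}^2dx$, and $b_d=2\pi^{d/2}/\Gamma(d/2)$. *)

(* Defs.v *)
From Stdlib Require Import Reals Lra Lia.
From Coquelicot Require Import Coquelicot.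
Open Scope R_scope.

Definition int0inf (f : R -> R) : R :=
  RInt_gen f (at_right 0) (Rbar_locally p_infty).

Definition ex_int0inf (f : R -> R) : Prop :=
  ex_RInt_gen f (at_right 0) (Rbar_locally p_infty).

Definition Bmom (d i : nat) (G : R -> R) : R :=
  int0inf (fun x => x ^ (d - 1 + i) * G x).

Definition V1 (d : nat) (G : R -> R) : R :=
  int0inf (fun x => x ^ (d - 1) * (Derive G x) ^ 2).

(* b_d = 2 pi^{d/2} / Gamma(d/2), the surface area of the unit sphere in R^d,
   computed via b_1 = 2, b_2 = 2 pi, b_{d+2} = (2 pi / d) b_d
   (equivalent to the Gamma formula since Gamma(s+1) = s Gamma(s)). *)
Fixpoint bsurf (d : nat) : R :=
  match d with
  | O => 0 (* unused: d >= 1 *)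
  | S O => 2
  | S (S O as d1) => 2 * PI
  | S (S d' as d1) => 2 * PI / INR d' * bsurf d'
  end.

Definition admissible (d q : nat) (G : R -> R) : Prop :=
  (forall x, 0 < x -> ex_derive G x) /\
  (forall i, (i <= q)%nat -> Nat.Even i -> ex_int0inf (fun x => x ^ (d - 1 + i) * G x)) /\
  ex_int0inf (fun x => x ^ (d - 1) * (Derive G x) ^ 2) /\
  Bmom d 0 G = / bsurf d /\
  (forall i, (2 <= i <= q - 2)%nat -> Nat.Even i -> Bmom d i G = 0) /\
  Bmom d q G <> 0.

Definition objective (d q : nat) (G : R -> R) : R :=
  Bmom d q G ^ (2 * (d + 2)) * V1 d G ^ (2 * q).

(* Main.v *)
Require Import Defs.
From Stdlib Require Import Reals Lra Lia Arith FunctionalExtensionality ClassicalEpsilon Classical.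
From Coquelicot Require Import Coquelicot.
Open Scope R_scope.

Definition cs (f : R -> R) : Prop :=
  exists a b, 0 < a /\ a < b /\ (forall x, x < a \/ b < x -> f x = 0) /\
    (forall x, continuous f x).

Lemma RInt_zero_ext (f : R -> R) u v : u <= v ->
  (forall x, u < x < v -> f x = 0) -> RInt f u v = 0.
Proof.
  intros Huv H.
  rewrite (RInt_ext f (fun _ => 0)).
  - rewrite RInt_const. unfold scal; simpl; unfold mult; simpl. ring.
  - intros x Hx. rewrite Rmin_left in Hx by lra. rewrite Rmax_right in Hx by lra.
    now apply H.
Qed.

Lemma cs_is_RInt f a b : 0 < a -> a < b -> (forall x, x < a \/ b < x -> f x = 0) ->
  (forall x, continuous f x) ->
  forall a' b', a' <= a -> b <= b' -> is_RInt f a' b' (RInt f a b).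
Proof.
  intros Ha Hab Hz Hc a' b' H1 H2.
  assert (Hex: forall u v, ex_RInt f u v) by (intros; apply (ex_RInt_continuous (V:=R_CompleteNormedModule)); auto).
  assert (E1: RInt f a' a = 0) by (apply RInt_zero_ext; [lra| intros; apply Hz; lra]).
  assert (E2: RInt f b b' = 0) by (apply RInt_zero_ext; [lra| intros; apply Hz; lra]).
  assert (E: RInt f a' b' = RInt f a b).
  { rewrite <- (RInt_Chasles f a' a b') by auto.
    rewrite <- (RInt_Chasles f a b b') by auto.
    rewrite E1, E2. unfold plus; simpl. ring. }
  rewrite <- E. apply (RInt_correct (V:=R_CompleteNormedModule)). auto.
Qed.

Lemma cs_gen f a b : 0 < a -> a < b -> (forall x, x < a \/ b < x -> f x = 0) ->
  (forall x, continuous f x) ->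
  is_RInt_gen f (at_right 0) (Rbar_locally p_infty) (RInt f a b).
Proof.
  intros Ha Hab Hz Hc P HP.
  apply Filter_prod with (fun x => 0 < x < a) (fun y => b < y).
  - exists (mkposreal a Ha). intros y Hy Hy0. split; auto.
    unfold ball in Hy; simpl in Hy; unfold AbsRing_ball, abs, minus, plus, opp in Hy; simpl in Hy.
    apply Rabs_def2 in Hy. lra.
  - exists b. auto.
  - intros x y Hx Hy. exists (RInt f a b). split.
    + simpl. apply cs_is_RInt; auto; lra.
    + now apply locally_singleton.
Qed.

Lemma int0inf_unique f l : is_RInt_gen f (at_right 0) (Rbar_locally p_infty) l -> int0inf f = l.
Proof. intros H. unfold int0inf. now apply is_RInt_gen_unique. Qed.

Lemma cs_spec f : cs f -> exists a b, 0 < a /\ a < b /\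
   (forall x, x < a \/ b < x -> f x = 0) /\ (forall x, continuous f x) /\
   forall a' b', 0 < a' -> a' <= a -> b <= b' -> int0inf f = RInt f a' b' /\ ex_RInt f a' b'.
Proof.
  intros (a & b & Ha & Hab & Hz & Hc). exists a, b. repeat split; auto.
  - rewrite (int0inf_unique f (RInt f a b)) by (apply cs_gen; auto).
    symmetry. apply (is_RInt_unique (V:=R_CompleteNormedModule)). apply cs_is_RInt; auto.
  - apply (ex_RInt_continuous (V:=R_CompleteNormedModule)); auto.
Qed.

Lemma cs_ex f : cs f -> ex_int0inf f.
Proof. intros (a & b & Ha & Hab & Hz & Hc). exists (RInt f a b). apply cs_gen; auto. Qed.

Lemma cs_correct f : cs f -> is_RInt_gen f (at_right 0) (Rbar_locally p_infty) (int0inf f).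
Proof. intros H. apply (RInt_gen_correct (V:=R_CompleteNormedModule)). now apply cs_ex. Qed.

Lemma int0inf_plus f g : cs f -> cs g ->
  int0inf (fun x => f x + g x) = int0inf f + int0inf g.
Proof.
  intros Hf Hg. apply int0inf_unique.
  apply (is_RInt_gen_plus f g); now apply cs_correct.
Qed.

Lemma int0inf_scal f k : cs f -> int0inf (fun x => k * f x) = k * int0inf f.
Proof.
  intros Hf. apply int0inf_unique.
  apply (is_RInt_gen_scal f k); now apply cs_correct.
Qed.

Lemma cs_plus f g : cs f -> cs g -> cs (fun x => f x + g x).
Proof.
  intros (a1 & b1 & Ha1 & Hab1 & Hz1 & Hc1) (a2 & b2 & Ha2 & Hab2 & Hz2 & Hc2).
  exists (Rmin a1 a2), (Rmax b1 b2). repeat split.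
  - now apply Rmin_glb_lt.
  - apply Rlt_le_trans with b1; [|apply Rmax_l]. apply Rle_lt_trans with a1; auto. apply Rmin_l.
  - intros x Hx. rewrite Hz1, Hz2. ring.
    + destruct Hx; [left; apply Rlt_le_trans with (Rmin a1 a2); auto; apply Rmin_r|
        right; apply Rle_lt_trans with (Rmax b1 b2); auto; apply Rmax_r].
    + destruct Hx; [left; apply Rlt_le_trans with (Rmin a1 a2); auto; apply Rmin_l|
        right; apply Rle_lt_trans with (Rmax b1 b2); auto; apply Rmax_l].
  - intros x. apply (continuous_plus f g); auto.
Qed.

Lemma cs_mult g f : (forall x, continuous g x) -> cs f -> cs (fun x => g x * f x).
Proof.
  intros Hg (a & b & Ha & Hab & Hz & Hc). exists a, b. repeat split; auto.
  - intros x Hx. rewrite Hz; auto. ring.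
  - intros x. apply (continuous_mult g f); auto.
Qed.

Lemma cs_scal k f : cs f -> cs (fun x => k * f x).
Proof. intros. apply (cs_mult (fun _ => k)); auto. intros; apply continuous_const. Qed.

Lemma cs_zero : cs (fun _ => 0).
Proof. exists 1, 2. repeat split; try lra. intros; apply continuous_const. Qed.

Lemma cs_ext f g : (forall x, f x = g x) -> cs f -> cs g.
Proof. intros H Hf. replace g with f; auto. now apply functional_extensionality. Qed.

Lemma int0inf_ext f g : (forall x, f x = g x) -> int0inf f = int0inf g.
Proof. intros H. replace g with f; auto. now apply functional_extensionality. Qed.

Lemma int0inf_le f g : cs f -> cs g -> (forall x, 0 < x -> f x <= g x) ->
  int0inf f <= int0inf g.
Proof.
  intros Hf Hg Hle.
  destruct (cs_spec f Hf) as (a1 & b1 & Ha1 & Hab1 & _ & _ & H1).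
  destruct (cs_spec g Hg) as (a2 & b2 & Ha2 & Hab2 & _ & _ & H2).
  set (a := Rmin a1 a2). set (b := Rmax b1 b2).
  assert (0 < a) by (now apply Rmin_glb_lt).
  destruct (H1 a b) as [E1 X1]; auto; [apply Rmin_l|apply Rmax_l|].
  destruct (H2 a b) as [E2 X2]; auto; [apply Rmin_r|apply Rmax_r|].
  rewrite E1, E2. apply RInt_le; auto.
  - apply Rle_trans with a1; [apply Rmin_l|]. apply Rle_trans with b1; [lra|apply Rmax_l].
  - intros x Hx. apply Hle. lra.
Qed.

Lemma continuous_pow k : forall x, continuous (fun x => x ^ k) x.
Proof. intros x. apply (ex_derive_continuous (K:=R_AbsRing) (V:=R_NormedModule) (fun x => x ^ k)). auto_derive. auto. Qed.

Lemma cs_pow k f : cs f -> cs (fun x => x ^ k * f x).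
Proof. intros. apply (cs_mult (fun x => x ^ k)); auto. apply continuous_pow. Qed.


Lemma gen_pick f l : is_RInt_gen f (at_right 0) (Rbar_locally p_infty) l ->
  forall eps, 0 < eps -> forall c e, 0 < c ->
  exists a b y, 0 < a < c /\ e < b /\ is_RInt f a b y /\ Rabs (y - l) < eps.
Proof.
  intros H eps Heps c e Hc.
  destruct (H (ball l (mkposreal eps Heps))) as [Q R HQ HR HQR].
  { exists (mkposreal eps Heps). auto. }
  destruct HQ as [dl Hdl]. destruct HR as [M HM].
  set (a := Rmin c dl / 2). set (b := Rmax e M + 1).
  assert (Ha : 0 < Rmin c dl) by (apply Rmin_glb_lt; auto; apply cond_pos).
  assert (Hac : a < c) by (unfold a; assert (Rmin c dl <= c) by apply Rmin_l; lra).
  assert (Hq : Q a).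
  { apply Hdl. 2: unfold a; lra.
    change (Rabs (a - 0) < dl). rewrite Rminus_0_r, Rabs_pos_eq by (unfold a; lra).
    unfold a. assert (Rmin c dl <= dl) by apply Rmin_r. lra. }
  assert (Hr : R b).
  { apply HM. unfold b. assert (M <= Rmax e M) by apply Rmax_r. lra. }
  destruct (HQR a b Hq Hr) as [y [Hy1 Hy2]].
  exists a, b, y. repeat split; auto; try (unfold a; lra).
  unfold b. assert (e <= Rmax e M) by apply Rmax_l. lra.
Qed.

Lemma gen_zero_sub f : is_RInt_gen f (at_right 0) (Rbar_locally p_infty) 0 ->
  (forall x, 0 < x -> 0 <= f x) -> forall c e, 0 < c -> c < e -> is_RInt f c e 0.
Proof.
  intros H Hpos c e Hc Hce.
  assert (K : forall eps, 0 < eps -> ex_RInt f c e /\ 0 <= RInt f c e < eps).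
  { intros eps Heps.
    destruct (gen_pick f 0 H eps Heps c e Hc) as (a & b & y & Ha & Hb & Hy & Hyl).
    assert (Hab : ex_RInt f a b) by (exists y; auto).
    assert (Hae : ex_RInt f a e) by (apply (ex_RInt_Chasles_1 f a e b); [lra|auto]).
    assert (Hce' : ex_RInt f c e) by (apply (ex_RInt_Chasles_2 f a c e); [lra|auto]).
    assert (Hac : ex_RInt f a c) by (apply (ex_RInt_Chasles_1 f a c e); [lra|auto]).
    assert (Heb : ex_RInt f e b) by (apply (ex_RInt_Chasles_2 f a e b); [lra|auto]).
    assert (E : RInt f a b = RInt f a c + RInt f c e + RInt f e b).
    { rewrite <- (RInt_Chasles f a e b) by auto. rewrite <- (RInt_Chasles f a c e) by auto.
      reflexivity. }
    assert (Ey : RInt f a b = y) by (apply (is_RInt_unique (V:=R_CompleteNormedModule)); auto).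
    assert (P1 : 0 <= RInt f a c) by (apply RInt_ge_0; auto; [lra| intros; apply Hpos; lra]).
    assert (P2 : 0 <= RInt f c e) by (apply RInt_ge_0; auto; [lra| intros; apply Hpos; lra]).
    assert (P3 : 0 <= RInt f e b) by (apply RInt_ge_0; auto; [lra| intros; apply Hpos; lra]).
    rewrite Rminus_0_r in Hyl. apply Rabs_def2 in Hyl.
    split; auto. lra. }
  destruct (K 1 Rlt_0_1) as [Hex _].
  assert (Z : RInt f c e = 0).
  { destruct (K 1 Rlt_0_1) as [_ [H0 _]].
    destruct (Rle_lt_or_eq_dec 0 (RInt f c e) H0) as [Hlt|]; auto.
    destruct (K (RInt f c e) Hlt) as [_ [_ Hc']]. lra. }
  rewrite <- Z. apply (RInt_correct (V:=R_CompleteNormedModule)). auto.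
Qed.

Definition xi (G : R -> R) (x y : R) : R :=
  epsilon (inhabits 0) (fun c => x <= c <= y /\
    ((exists c', x <= c' <= y /\ G y - G x = Derive G c' * (y - x)) ->
       G y - G x = Derive G c * (y - x))).

Lemma xi_spec G x y : x <= y -> x <= xi G x y <= y /\
    ((exists c', x <= c' <= y /\ G y - G x = Derive G c' * (y - x)) ->
       G y - G x = Derive G (xi G x y) * (y - x)).
Proof.
  intros Hxy. unfold xi. apply epsilon_spec.
  destruct (classic (exists c', x <= c' <= y /\ G y - G x = Derive G c' * (y - x))) as [[c' Hc']|Hn].
  - exists c'. split; [apply Hc'|]. intros _. apply Hc'.
  - exists x. split; [lra|]. intros H'. contradiction.
Qed.

Lemma mvt_ex G x y : 0 < x -> x <= y -> (forall t, 0 < t -> ex_derive G t) ->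
  exists c', x <= c' <= y /\ G y - G x = Derive G c' * (y - x).
Proof.
  intros Hx Hxy Hd.
  destruct (Rle_lt_or_eq_dec x y Hxy) as [Hlt|Heq].
  - destruct (MVT_gen G x y (Derive G)) as [c' [Hc1 Hc2]].
    + intros t Ht. rewrite Rmin_left, Rmax_right in Ht by lra.
      apply Derive_correct. apply Hd. lra.
    + intros t Ht. rewrite Rmin_left, Rmax_right in Ht by lra.
      apply continuity_pt_filterlim. apply (ex_derive_continuous (K:=R_AbsRing) (V:=R_NormedModule)).
      apply Hd. lra.
    + rewrite Rmin_left, Rmax_right in Hc1 by lra. exists c'. auto.
  - subst. exists y. split; [lra|ring].
Qed.

Lemma sorted_last_ge x rest : sorted Rle (x :: rest) -> x <= seq.last x rest.
Proof.
  revert x. induction rest as [|y rest IH]; intros x Hs; simpl; [lra|].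
  destruct Hs as [H1 H2]. apply Rle_trans with y; auto.
Qed.

Lemma cs_ineq A L S g δ : 0 <= L -> 0 <= S -> 0 <= δ -> A ^ 2 <= L * S ->
  (A + g * δ) ^ 2 <= (L + δ) * (δ * g ^ 2 + S).
Proof.
  intros HL HS Hd H. apply Rminus_le_0.
  assert (K : 0 <= L * g ^ 2 + S - 2 * A * g).
  { destruct (Rle_lt_or_eq_dec 0 L HL) as [Hlt|Heq].
    - assert (0 <= L * (L * g ^ 2 + S - 2 * A * g)).
      { replace (L * (L * g ^ 2 + S - 2 * A * g)) with ((L * g - A) ^ 2 + (L * S - A ^ 2)) by ring.
        apply Rplus_le_le_0_compat; [apply pow2_ge_0| lra]. }
      apply Rmult_le_reg_l with L; auto. lra.
    - subst. rewrite Rmult_0_l in H.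
      assert (A = 0) by (destruct (Req_dec A 0) as [|Hn]; auto; exfalso; apply (pow_nonzero A 2 Hn); apply Rle_antisym; [auto|apply pow2_ge_0]).
      subst. assert (0 <= g ^ 2) by apply pow2_ge_0. nra. }
  replace ((L + δ) * (δ * g ^ 2 + S) - (A + g * δ) ^ 2) with (δ * (L * g ^ 2 + S - 2 * A * g) + (L * S - A ^ 2)) by ring.
  apply Rplus_le_le_0_compat; [apply Rmult_le_pos; auto| lra].
Qed.

Lemma riemann_mvt (G : R -> R) c : 0 < c -> (forall t, 0 < t -> ex_derive G t) ->
  forall rest x, sorted Rle (x :: rest) -> c <= x ->
  let S := Riemann_sum (fun t => Derive G t ^ 2) (SF_seq_f2 (xi G) (x :: rest)) in
  0 <= S /\ (G (seq.last x rest) - G x) ^ 2 <= (seq.last x rest - x) * S.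
Proof.
  intros Hc Hd rest. induction rest as [|y rest IH]; intros x Hs Hx S.
  - assert (E : S = 0) by reflexivity. rewrite E. simpl. split; [lra|]. right; ring.
  - destruct Hs as [Hxy Hs].
    assert (Hcy : c <= y) by lra.
    destruct (IH y Hs Hcy) as [IH1 IH2].
    unfold S. rewrite SF_cons_f2 by (simpl; lia). rewrite Riemann_sum_cons.
    simpl seq.head. simpl SF_h.
    set (S' := Riemann_sum (fun t => Derive G t ^ 2) (SF_seq_f2 (xi G) (y :: rest))) in *.
    destruct (xi_spec G x y Hxy) as [_ Hm].
    specialize (Hm (mvt_ex G x y ltac:(lra) Hxy Hd)).
    change (seq.last x (y :: rest)) with (seq.last y rest).
    unfold plus, scal; simpl; unfold mult; simpl.
    set (l := seq.last y rest) in *.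
    assert (Hyl : y <= l) by (apply sorted_last_ge; auto).
    set (g := Derive G (xi G x y)) in *.
    split.
    + assert (0 <= g ^ 2) by (apply pow2_ge_0). nra.
    + replace (G l - G x) with ((G l - G y) + g * (y - x)) by lra.
      replace (l - x) with ((l - y) + (y - x)) by ring.
      replace ((y - x) * g ^ 2 + S') with ((y - x) * g ^ 2 + S') by ring.
      apply cs_ineq; lra.
Qed.


Lemma const_of_zero (G : R -> R) k c e : 0 < c -> c < e -> (forall x, 0 < x -> ex_derive G x) ->
  is_RInt (fun x => x ^ k * Derive G x ^ 2) c e 0 -> G c = G e.
Proof.
  intros Hc Hce Hd HI.
  set (w := c ^ k).
  assert (Hw : 0 < w) by (apply pow_lt; auto).
  assert (Key : forall eps, 0 < eps -> (G e - G c) ^ 2 <= (e - c) * (eps / w)).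
  { intros eps Heps.
    destruct (HI (ball 0 (mkposreal eps Heps))) as [dl Hdl].
    { exists (mkposreal eps Heps). auto. }
    destruct (seq_step_unif_part_ex c e dl) as [n Hn].
    set (ptd := SF_seq_f2 (xi G) (unif_part c e n)).
    assert (Hf : forall a0 b0, a0 <= b0 -> a0 <= xi G a0 b0 <= b0) by (intros; apply xi_spec; auto).
    destruct (Riemann_fine_unif_part (xi G) c e n Hf ltac:(lra)) as (Hst & Hpt & Hh & Hl).
    assert (Hlx : SF_lx ptd = unif_part c e n).
    { apply SF_lx_f2. unfold unif_part. rewrite seq.size_mkseq. lia. }
    assert (Hball := Hdl ptd).
    simpl in Hball. fold ptd in Hball.
    assert (HB : Rabs (sign (e - c) * Riemann_sum (fun x => x ^ k * Derive G x ^ 2) ptd - 0) < eps).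
    { apply Hball.
      - rewrite Hlx. auto.
      - rewrite Rmin_left, Rmax_right by lra. fold ptd in Hh, Hl. auto. }
    rewrite sign_eq_1, Rminus_0_r, Rmult_1_l in HB by lra.
    apply Rabs_def2 in HB.
    assert (Hcmp : Riemann_sum (fun t => Derive G t ^ 2) ptd <=
                   Riemann_sum (fun t => scal (/ w) (t ^ k * Derive G t ^ 2)) ptd).
    { apply Riemann_sum_le; auto.
      intros t Ht. fold ptd in Hh, Hl. rewrite Hl, Hh in Ht.
      change (Derive G t ^ 2 <= / w * (t ^ k * Derive G t ^ 2)).
      assert (w <= t ^ k) by (apply pow_incr; lra).
      assert (0 <= Derive G t ^ 2) by apply pow2_ge_0.
      apply Rmult_le_reg_l with w; auto.
      replace (w * (/ w * (t ^ k * Derive G t ^ 2))) with (t ^ k * Derive G t ^ 2) by (field; lra).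
      apply Rmult_le_compat_r; auto. }
    rewrite Riemann_sum_scal in Hcmp.
    change (Riemann_sum (fun t => Derive G t ^ 2) ptd <=
        / w * Riemann_sum (fun t => t ^ k * Derive G t ^ 2) ptd) in Hcmp.
    assert (Hm' : (G e - G c) ^ 2 <= (e - c) * Riemann_sum (fun t => Derive G t ^ 2) ptd).
    { unfold ptd. destruct (unif_part c e n) as [|x rest] eqn:E.
      { unfold unif_part in E. discriminate. }
      assert (Hx : x = c).
      { pose proof (head_unif_part 0 c e n) as H0. rewrite E in H0. simpl in H0. auto. }
      assert (Hlast : seq.last x rest = e).
      { pose proof (last_unif_part 0 c e n) as H0. rewrite E in H0. simpl in H0. auto. }
      assert (Hsort : sorted Rle (x :: rest)) by (rewrite <- E; apply unif_part_sort; lra).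
      destruct (riemann_mvt G c Hc Hd rest x Hsort ltac:(lra)) as [_ Hm].
      rewrite Hlast in Hm. rewrite Hx in Hm |- *. exact Hm. }
    apply Rle_trans with (1 := Hm').
    apply Rmult_le_compat_l; [lra|].
    apply Rle_trans with (1 := Hcmp).
    rewrite (Rmult_comm (/ w)). unfold Rdiv. apply Rmult_le_compat_r; [|lra].
    left; apply Rinv_0_lt_compat; auto. }
  destruct (Req_dec (G e - G c) 0) as [Z|Hn]; [lra|].
  exfalso.
  assert (Hp : 0 < (G e - G c) ^ 2).
  { destruct (pow2_ge_0 (G e - G c)) as [|H0]; auto. symmetry in H0.
    exfalso. apply (pow_nonzero _ 2 Hn H0). }
  assert (Heps : 0 < w * (G e - G c) ^ 2 / (2 * (e - c))).
  { apply Rdiv_lt_0_compat; [apply Rmult_lt_0_compat; auto| lra]. }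
  specialize (Key _ Heps).
  replace ((e - c) * (w * (G e - G c) ^ 2 / (2 * (e - c)) / w)) with ((G e - G c) ^ 2 / 2) in Key
    by (field; lra).
  lra.
Qed.


Lemma RInt_pow_const K k a b : RInt (fun x => K * x ^ k) a b = K * (b ^ S k - a ^ S k) / INR (S k).
Proof.
  assert (HN : INR (S k) <> 0) by (apply not_0_INR; lia).
  apply (is_RInt_unique (V:=R_CompleteNormedModule)).
  replace (K * (b ^ S k - a ^ S k) / INR (S k)) with
    (minus ((fun x => K * x ^ S k / INR (S k)) b) ((fun x => K * x ^ S k / INR (S k)) a))
    by (unfold minus, plus, opp; simpl; field; auto).
  apply (is_RInt_derive (V:=R_CompleteNormedModule) (fun x => K * x ^ S k / INR (S k)) (fun x => K * x ^ k)).
  - intros x _. auto_derive; auto. change (match k with | 0%nat => 1 | S _ => INR k + 1 end) with (INR (S k)). field. auto.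
  - intros x _. apply (continuous_mult (fun _ => K) (fun x => x ^ k)).
    apply continuous_const. apply continuous_pow.
Qed.

Lemma const_int_zero f K k : (forall x, 0 < x -> f x = K * x ^ k) -> ex_int0inf f ->
  K = 0 /\ int0inf f = 0.
Proof.
  intros Hf Hex.
  assert (Hl := RInt_gen_correct (V:=R_CompleteNormedModule) f Hex).
  change (RInt_gen f (at_right 0) (Rbar_locally p_infty)) with (int0inf f) in Hl.
  set (l := int0inf f) in *.
  assert (HN : 0 < INR (S k)) by (apply lt_0_INR; lia).
  set (N := INR (S k)) in *.
  assert (Y : forall a b y, 0 < a -> a < b -> is_RInt f a b y -> y = K * (b ^ S k - a ^ S k) / N).
  { intros a b y Ha Hab H. apply (is_RInt_unique (V:=R_CompleteNormedModule)) in H.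
    rewrite <- H. rewrite (RInt_ext f (fun x => K * x ^ k)).
    - apply RInt_pow_const.
    - intros x Hx. rewrite Rmin_left, Rmax_right in Hx by lra. apply Hf; lra. }
  assert (HK : K = 0).
  { destruct (Req_dec K 0) as [|HK]; auto. exfalso.
    assert (HaK : 0 < Rabs K) by (apply Rabs_pos_lt; auto).
    set (e0 := ((Rabs l + 1) * N + Rabs K) / Rabs K + 1).
    destruct (gen_pick f l Hl 1 Rlt_0_1 1 (Rmax 1 e0) Rlt_0_1) as (a & b & y & Ha & Hb & Hy & Hyl).
    assert (H1 : 1 <= Rmax 1 e0) by apply Rmax_l.
    assert (H2 : e0 <= Rmax 1 e0) by apply Rmax_r.
    rewrite (Y a b y ltac:(lra) ltac:(lra) Hy) in Hyl.
    assert (HA : a ^ S k <= 1) by (rewrite <- (pow1 (S k)); apply pow_incr; lra).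
    assert (HB : b <= b ^ S k) by (rewrite <- (pow_1 b) at 1; apply Rle_pow; [lra|lia]).
    assert (He1 : 0 < e0 - 1).
    { unfold e0. assert (0 < ((Rabs l + 1) * N + Rabs K) / Rabs K); [|lra].
      apply Rdiv_lt_0_compat; auto. pose proof (Rabs_pos l). nra. }
    set (D := b ^ S k - a ^ S k) in *.
    assert (HD : e0 - 1 < D) by (unfold D; lra).
    assert (He0 : Rabs K * (e0 - 1) = (Rabs l + 1) * N + Rabs K) by (unfold e0; field; lra).
    assert (Hy' : Rabs (K * D / N) = Rabs K * D / N).
    { unfold Rdiv. rewrite !Rabs_mult, Rabs_inv, (Rabs_pos_eq D), (Rabs_pos_eq N); lra. }
    pose proof (Rabs_triang_inv (K * D / N) l).
    assert (H3 : Rabs K * D / N < Rabs l + 1) by lra.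
    assert (H4 : Rabs K * D < (Rabs l + 1) * N).
    { replace (Rabs K * D) with (Rabs K * D / N * N) by (field; lra).
      apply Rmult_lt_compat_r; auto. }
    assert (H5 : Rabs K * (e0 - 1) < Rabs K * D) by (apply Rmult_lt_compat_l; auto).
    lra. }
  split; auto. subst K.
  destruct (Req_dec l 0) as [|Hl0]; auto. exfalso.
  assert (Hpos : 0 < Rabs l) by (apply Rabs_pos_lt; auto).
  destruct (gen_pick f l Hl (Rabs l) Hpos 1 2 Rlt_0_1) as (a & b & y & Ha & Hb & Hy & Hyl).
  rewrite (Y a b y ltac:(lra) ltac:(lra) Hy) in Hyl.
  replace (0 * (b ^ S k - a ^ S k) / N - l) with (- l) in Hyl by (field; lra).
  rewrite Rabs_Ropp in Hyl. lra.
Qed.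


Lemma V1_nonzero d q G : Nat.Even q -> admissible d q G -> V1 d G <> 0.
Proof.
  intros Hqe (Hd & Hmom & HexV & HB0 & Hmid & HBq) HV.
  assert (Hg := RInt_gen_correct (V:=R_CompleteNormedModule) _ HexV).
  change (RInt_gen (fun x => x ^ (d - 1) * Derive G x ^ 2) (at_right 0) (Rbar_locally p_infty))
    with (V1 d G) in Hg.
  rewrite HV in Hg.
  assert (Hsub := gen_zero_sub _ Hg).
  assert (Hc : forall c e, 0 < c -> c < e -> G c = G e).
  { intros c e Hc Hce. apply (const_of_zero G (d - 1) c e Hc Hce Hd).
    apply Hsub; auto. intros x Hx. apply Rmult_le_pos; [apply pow_le; lra| apply pow2_ge_0]. }
  assert (Hconst : forall x, 0 < x -> x ^ (d - 1 + q) * G x = G 1 * x ^ (d - 1 + q)).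
  { intros x Hx. destruct (Rtotal_order x 1) as [H|[H|H]].
    - rewrite (Hc x 1); auto. ring.
    - subst. ring.
    - rewrite (Hc 1 x); auto; try lra. }
  destruct (const_int_zero _ (G 1) (d - 1 + q) Hconst (Hmom q (le_n q) Hqe)) as [_ Z].
  apply HBq. exact Z.
Qed.


Definition psi (t : R) : R := t * (t + Rabs t).
Definition dpsi (t : R) : R := 2 * (t + Rabs t).

Lemma psi_neg t : t <= 0 -> psi t = 0 /\ dpsi t = 0.
Proof. intros H. unfold psi, dpsi. rewrite Rabs_left1 by auto. split; ring. Qed.

Lemma psi_pos t : 0 < t -> 0 < psi t.
Proof. intros H. unfold psi. rewrite Rabs_pos_eq by lra. nra. Qed.

Lemma psi_derive t : is_derive psi t (dpsi t).
Proof.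
  destruct (Rtotal_order t 0) as [Hn|[Hz|Hp]].
  - apply (is_derive_ext_loc (fun _ => 0)).
    + exists (mkposreal (- t) ltac:(lra)). intros u Hu.
      change (Rabs (u - t) < - t) in Hu. apply Rabs_def2 in Hu.
      symmetry. apply psi_neg. lra.
    + replace (dpsi t) with 0 by (symmetry; apply psi_neg; lra). auto_derive; auto.
  - subst. apply is_derive_Reals. intros eps Heps.
    exists (mkposreal (eps / 2) ltac:(lra)). intros h Hh0 Hh. simpl in Hh.
    unfold psi, dpsi. rewrite Rplus_0_l, Rabs_R0.
    replace ((h * (h + Rabs h) - 0 * (0 + 0)) / h - 2 * (0 + 0)) with (h + Rabs h) by (field; auto).
    apply Rle_lt_trans with (Rabs h + Rabs (Rabs h)); [apply Rabs_triang|].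
    rewrite Rabs_Rabsolu. lra.
  - apply (is_derive_ext_loc (fun u => 2 * u ^ 2)).
    + exists (mkposreal t Hp). intros u Hu.
      change (Rabs (u - t) < t) in Hu. apply Rabs_def2 in Hu.
      cbv beta. unfold psi. rewrite Rabs_pos_eq by lra. change (@eq R (2 * u ^ 2) (u * (u + u))). ring.
    + unfold dpsi. rewrite Rabs_pos_eq by lra. auto_derive; auto. match goal with |- ?a = ?b => change (@eq R a b) end; ring.
Qed.

Lemma continuous_dpsi t : continuous dpsi t.
Proof.
  unfold dpsi. apply (continuous_mult (fun _ => 2) (fun t => t + Rabs t)).
  - apply continuous_const.
  - apply (continuous_plus (fun t => t) Rabs). apply continuous_id. apply continuous_Rabs.
Qed.

Lemma continuous_psi t : continuous psi t.
Proof.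
  apply (ex_derive_continuous (K:=R_AbsRing) (V:=R_NormedModule)).
  exists (dpsi t). apply psi_derive.
Qed.

Definition bump (a b x : R) : R := psi (x - a) * psi (b - x).
Definition dbump (a b x : R) : R := dpsi (x - a) * psi (b - x) - psi (x - a) * dpsi (b - x).

Lemma bump_derive a b x : is_derive (bump a b) x (dbump a b x).
Proof.
  assert (H1 : is_derive (fun x => psi (x - a)) x (dpsi (x - a))).
  { assert (Hl : is_derive (fun x => x - a) x 1) by (auto_derive; auto).
    pose proof (is_derive_comp psi (fun x => x - a) x _ _ (psi_derive (x - a)) Hl) as H.
    unfold scal in H; simpl in H; unfold mult in H; simpl in H. rewrite Rmult_1_l in H. exact H. }
  assert (H2 : is_derive (fun x => psi (b - x)) x (- dpsi (b - x))).
  { assert (Hl : is_derive (fun x => b - x) x (-1)) by (auto_derive; auto; ring).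
    pose proof (is_derive_comp psi (fun x => b - x) x _ _ (psi_derive (b - x)) Hl) as H.
    unfold scal in H; simpl in H; unfold mult in H; simpl in H.
    replace (- dpsi (b - x)) with (-1 * dpsi (b - x)) by ring. exact H. }
  pose proof (is_derive_mult _ _ x _ _ H1 H2 (fun n m => Rmult_comm n m)) as H.
  unfold plus, mult in H; simpl in H.
  unfold bump, dbump. replace (dpsi (x - a) * psi (b - x) - psi (x - a) * dpsi (b - x))
    with (dpsi (x - a) * psi (b - x) + psi (x - a) * - dpsi (b - x)) by ring.
  exact H.
Qed.

Definition good (h : R -> R) : Prop :=
  (forall x, ex_derive h x) /\ cs h /\ cs (Derive h).

Lemma good_bump a b : 0 < a -> a < b -> good (bump a b).
Proof.
  intros Ha Hab.
  assert (HD : forall x, Derive (bump a b) x = dbump a b x) by (intros; apply is_derive_unique, bump_derive).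
  assert (Hz : forall x, x < a \/ b < x -> psi (x - a) = 0 /\ dpsi (x - a) = 0 \/ psi (b - x) = 0 /\ dpsi (b - x) = 0).
  { intros x [H|H]; [left|right]; apply psi_neg; lra. }
  split; [|split].
  - intros x. exists (dbump a b x). apply bump_derive.
  - exists a, b. repeat split; auto.
    + intros x Hx. unfold bump. destruct (Hz x Hx) as [[-> _]|[-> _]]; ring.
    + intros x. apply (ex_derive_continuous (K:=R_AbsRing) (V:=R_NormedModule)).
      exists (dbump a b x). apply bump_derive.
  - exists a, b. repeat split; auto.
    + intros x Hx. rewrite HD. unfold dbump. destruct (Hz x Hx) as [[-> ->]|[-> ->]]; ring.
    + intros x. replace (Derive (bump a b)) with (dbump a b) by (apply functional_extensionality; intros; auto).
      unfold dbump.
      apply (continuous_minus (fun x => dpsi (x - a) * psi (b - x)) (fun x => psi (x - a) * dpsi (b - x))).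
      * apply (continuous_mult (fun x => dpsi (x - a)) (fun x => psi (b - x))).
        -- apply (continuous_comp (fun x => x - a) dpsi). apply (ex_derive_continuous (K:=R_AbsRing) (V:=R_NormedModule)). auto_derive; auto. apply continuous_dpsi.
        -- apply (continuous_comp (fun x => b - x) psi). apply (ex_derive_continuous (K:=R_AbsRing) (V:=R_NormedModule)). auto_derive; auto. apply continuous_psi.
      * apply (continuous_mult (fun x => psi (x - a)) (fun x => dpsi (b - x))).
        -- apply (continuous_comp (fun x => x - a) psi). apply (ex_derive_continuous (K:=R_AbsRing) (V:=R_NormedModule)). auto_derive; auto. apply continuous_psi.
        -- apply (continuous_comp (fun x => b - x) dpsi). apply (ex_derive_continuous (K:=R_AbsRing) (V:=R_NormedModule)). auto_derive; auto. apply continuous_dpsi.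
Qed.

Lemma bump_pos a b x : a < x < b -> 0 < bump a b x.
Proof. intros H. unfold bump. apply Rmult_lt_0_compat; apply psi_pos; lra. Qed.

Lemma bump_zero a b x : x < a \/ b < x -> bump a b x = 0.
Proof.
  intros [H|H]; unfold bump.
  - rewrite (proj1 (psi_neg (x - a) ltac:(lra))). ring.
  - rewrite (proj1 (psi_neg (b - x) ltac:(lra))). ring.
Qed.

Lemma good_plus f g : good f -> good g -> good (fun x => f x + g x).
Proof.
  intros (Hf1 & Hf2 & Hf3) (Hg1 & Hg2 & Hg3).
  split; [|split].
  - intros x. apply (ex_derive_plus f g); auto.
  - apply cs_plus; auto.
  - apply (cs_ext (fun x => Derive f x + Derive g x)).
    + intros x. symmetry. apply (Derive_plus f g); auto.
    + apply cs_plus; auto.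
Qed.

Lemma good_scal k f : good f -> good (fun x => k * f x).
Proof.
  intros (Hf1 & Hf2 & Hf3).
  split; [|split].
  - intros x. apply ex_derive_scal; auto.
  - apply cs_scal; auto.
  - apply (cs_ext (fun x => k * Derive f x)).
    + intros x. symmetry. apply Derive_scal.
    + apply cs_scal; auto.
Qed.

Lemma good_zero : good (fun _ => 0).
Proof.
  split; [|split].
  - intros x. auto_derive; auto.
  - apply cs_zero.
  - apply (cs_ext (fun _ => 0)). intros x. rewrite Derive_const. auto. apply cs_zero.
Qed.


Lemma Bmom_plus d i f g : cs f -> cs g -> Bmom d i (fun x => f x + g x) = Bmom d i f + Bmom d i g.
Proof.
  intros Hf Hg. unfold Bmom.
  rewrite (int0inf_ext _ (fun x => x ^ (d - 1 + i) * f x + x ^ (d - 1 + i) * g x)) by (intros; ring).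
  apply int0inf_plus; apply cs_pow; auto.
Qed.

Lemma Bmom_scal d i k f : cs f -> Bmom d i (fun x => k * f x) = k * Bmom d i f.
Proof.
  intros Hf. unfold Bmom.
  rewrite (int0inf_ext _ (fun x => k * (x ^ (d - 1 + i) * f x))) by (intros; ring).
  apply int0inf_scal; apply cs_pow; auto.
Qed.

Lemma cs_sum (F : nat -> R -> R) n : (forall k, cs (F k)) -> cs (fun x => sum_f_R0 (fun k => F k x) n).
Proof.
  intros HF. induction n; simpl.
  - apply (cs_ext (F 0%nat)); auto.
  - apply (cs_plus (fun x => sum_f_R0 (fun k => F k x) n) (F (S n))); auto.
Qed.

Lemma int0inf_sum (F : nat -> R -> R) n : (forall k, cs (F k)) ->
  int0inf (fun x => sum_f_R0 (fun k => F k x) n) = sum_f_R0 (fun k => int0inf (F k)) n.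
Proof.
  intros HF. induction n; simpl.
  - reflexivity.
  - rewrite (int0inf_plus (fun x => sum_f_R0 (fun k => F k x) n) (F (S n))); auto.
    + rewrite IHn. reflexivity.
    + apply cs_sum; auto.
Qed.

Lemma good_sum (F : nat -> R -> R) n : (forall k, good (F k)) -> good (fun x => sum_f_R0 (fun k => F k x) n).
Proof.
  intros HF. induction n; simpl.
  - destruct (HF 0%nat) as (H1 & H2 & H3). split; [|split]; auto.
  - apply (good_plus (fun x => sum_f_R0 (fun k => F k x) n) (F (S n))); auto.
Qed.

Lemma Bmom_sum d i (F : nat -> R -> R) n : (forall k, cs (F k)) ->
  Bmom d i (fun x => sum_f_R0 (fun k => F k x) n) = sum_f_R0 (fun k => Bmom d i (F k)) n.
Proof.
  intros HF. unfold Bmom.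
  rewrite (int0inf_ext _ (fun x => sum_f_R0 (fun k => x ^ (d - 1 + i) * F k x) n)).
  - apply int0inf_sum. intros k; apply cs_pow; auto.
  - intros x. rewrite scal_sum. apply sum_eq. intros; ring.
Qed.

Definition delta (k j : nat) : R := if Nat.eq_dec k j then 1 else 0.

Lemma sum_delta_out (t : nat -> R) N j : (N < j)%nat -> sum_f_R0 (fun k => t k * delta k j) N = 0.
Proof.
  induction N; intros H; simpl.
  - unfold delta. destruct (Nat.eq_dec 0 j); [lia|ring].
  - rewrite IHN by lia. unfold delta. destruct (Nat.eq_dec (S N) j); [lia|ring].
Qed.

Lemma sum_delta (t : nat -> R) N j : (j <= N)%nat -> sum_f_R0 (fun k => t k * delta k j) N = t j.
Proof.
  induction N; intros H; simpl.
  - assert (j = 0%nat) by lia. subst. unfold delta. simpl. ring.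
  - destruct (Nat.eq_dec j (S N)) as [->|Hn].
    + rewrite sum_delta_out by lia. unfold delta. destruct (Nat.eq_dec (S N) (S N)); [ring|lia].
    + rewrite IHN by lia. unfold delta. destruct (Nat.eq_dec (S N) j); [lia|ring].
Qed.

Lemma poly_pos n (c : nat -> R) : exists Y, 1 <= Y /\
  forall y, Y <= y -> 0 < y ^ S n - sum_f_R0 (fun k => c k * y ^ k) n.
Proof.
  set (S0 := sum_f_R0 (fun k => Rabs (c k)) n).
  assert (HS0 : 0 <= S0) by (apply cond_pos_sum; intros; apply Rabs_pos).
  exists (1 + S0). split; [lra|]. intros y Hy.
  assert (Hy1 : 1 <= y) by lra.
  assert (Hyn : 0 < y ^ n) by (apply pow_lt; lra).
  assert (H1 : sum_f_R0 (fun k => c k * y ^ k) n <= S0 * y ^ n).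
  { apply Rle_trans with (Rabs (sum_f_R0 (fun k => c k * y ^ k) n)); [apply Rle_abs|].
    apply Rle_trans with (1 := sum_f_R0_triangle _ n).
    unfold S0. rewrite Rmult_comm, scal_sum. apply sum_Rle. intros k Hk.
    rewrite Rabs_mult, (Rabs_pos_eq (y ^ k)) by (apply pow_le; lra).
    apply Rmult_le_compat_l; [apply Rabs_pos|]. apply Rle_pow; auto. }
  simpl. nra.
Qed.


Lemma int0inf_pos_supp f a b : 0 < a -> a < b -> (forall x, x < a \/ b < x -> f x = 0) ->
  (forall x, continuous f x) -> (forall x, a < x < b -> 0 < f x) -> 0 < int0inf f.
Proof.
  intros Ha Hab Hz Hc Hp.
  rewrite (int0inf_unique f (RInt f a b)) by (apply cs_gen; auto).
  apply RInt_gt_0; auto.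
Qed.

Lemma good_cs f : good f -> cs f.
Proof. intros (_ & H & _). auto. Qed.

Lemma cs_cont f : cs f -> forall x, continuous f x.
Proof. intros (a & b & _ & _ & _ & H). auto. Qed.

Lemma sum_zero N : sum_f_R0 (fun _ => 0) N = 0.
Proof. induction N; simpl; [ring| rewrite IHN; ring]. Qed.

Lemma dual d N : exists u : nat -> R -> R, (forall k, good (u k)) /\
  forall k j, (k <= N)%nat -> (j <= N)%nat -> Bmom d (2 * j) (u k) = delta k j.
Proof.
  induction N as [|N IH].
  - set (b0 := bump 1 2).
    assert (Hb0 : good b0) by (apply good_bump; lra).
    assert (Hm : 0 < Bmom d (2 * 0) b0).
    { unfold Bmom. apply (int0inf_pos_supp _ 1 2); try lra.
      - intros x Hx. unfold b0. rewrite bump_zero; auto. ring.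
      - apply cs_cont. apply cs_pow. apply good_cs; auto.
      - intros x Hx. apply Rmult_lt_0_compat; [apply pow_lt; lra| apply bump_pos; auto]. }
    exists (fun _ x => / Bmom d (2 * 0) b0 * b0 x). split.
    + intros k. apply good_scal; auto.
    + intros k j Hk Hj. assert (k = 0%nat) by lia. assert (j = 0%nat) by lia. subst.
      rewrite Bmom_scal by (apply good_cs; auto). unfold delta. destruct (Nat.eq_dec 0 0); [|lia].
      field. lra.
  - destruct IH as [u [Hgood Hdual]].
    set (c := fun k => Bmom d (2 * S N) (u k)).
    destruct (poly_pos N c) as [Y [HY1 HY]].
    set (b := bump Y (Y + 1)).
    assert (Hb : good b) by (apply good_bump; lra).
    set (mb := fun k => Bmom d (2 * k) b).
    set (F := fun k x => - mb k * u k x).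
    assert (HF : forall k, good (F k)) by (intros; apply good_scal; auto).
    set (w := fun x => b x + sum_f_R0 (fun k => F k x) N).
    assert (Hw : good w) by (apply good_plus; auto; apply good_sum; auto).
    assert (Hmw : forall j, Bmom d (2 * j) w = mb j + sum_f_R0 (fun k => - mb k * Bmom d (2 * j) (u k)) N).
    { intros j. unfold w. rewrite Bmom_plus by (apply good_cs; auto; apply good_sum; auto).
      rewrite Bmom_sum by (intros; apply good_cs; auto).
      f_equal. apply sum_eq. intros k _. unfold F. apply Bmom_scal. apply good_cs; auto. }
    assert (Hw0 : forall j, (j <= N)%nat -> Bmom d (2 * j) w = 0).
    { intros j Hj. rewrite Hmw.
      rewrite (sum_eq _ (fun k => (- mb k) * delta k j)) by (intros; rewrite Hdual; auto).
      rewrite sum_delta by auto. ring. }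
    set (mu := Bmom d (2 * S N) w).
    assert (Hmu : 0 < mu).
    { set (f := fun x => x ^ (d - 1 + 2 * S N) * b x +
          sum_f_R0 (fun k => - c k * (x ^ (d - 1 + 2 * k) * b x)) N).
      assert (E : mu = int0inf f).
      { unfold f. rewrite int0inf_plus.
        2: apply cs_pow, good_cs; auto.
        2: apply cs_sum; intros; apply cs_scal, cs_pow, good_cs; auto.
        rewrite int0inf_sum by (intros; apply cs_scal, cs_pow, good_cs; auto).
        unfold mu. rewrite Hmw. f_equal. apply sum_eq. intros k _.
        rewrite int0inf_scal by (apply cs_pow, good_cs; auto).
        unfold mb, c, Bmom. ring. }
      rewrite E.
      assert (Hfc : cs f).
      { unfold f. apply cs_plus; [apply cs_pow, good_cs; auto|].
        apply cs_sum; intros; apply cs_scal, cs_pow, good_cs; auto. }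
      assert (Hid : forall x, f x = x ^ (d - 1) * b x *
                 ((x ^ 2) ^ S N - sum_f_R0 (fun k => c k * (x ^ 2) ^ k) N)).
      { intros x. unfold f.
        assert (Hs : sum_f_R0 (fun k => - c k * (x ^ (d - 1 + 2 * k) * b x)) N =
                     - (x ^ (d - 1) * b x * sum_f_R0 (fun k => c k * (x ^ 2) ^ k) N)).
        { rewrite scal_sum.
          apply Rplus_eq_reg_r with (sum_f_R0 (fun i => c i * (x ^ 2) ^ i * (x ^ (d - 1) * b x)) N).
          rewrite <- plus_sum. rewrite Rplus_opp_l.
          rewrite (sum_eq _ (fun _ => 0)). apply sum_zero.
          intros k _. rewrite pow_add, pow_mult. ring. }
        rewrite Hs. rewrite pow_add, pow_mult. ring. }
      apply (int0inf_pos_supp f Y (Y + 1)); try lra.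
      - intros x Hx. rewrite Hid. unfold b. rewrite bump_zero; auto. ring.
      - apply cs_cont; auto.
      - intros x Hx. rewrite Hid. apply Rmult_lt_0_compat.
        + apply Rmult_lt_0_compat; [apply pow_lt; lra| apply bump_pos; auto].
        + apply HY. assert (x <= x ^ 2) by (simpl; nra). lra. }
    set (v := fun x => / mu * w x).
    assert (Hv : good v) by (apply good_scal; auto).
    assert (Hmv : forall j, (j <= S N)%nat -> Bmom d (2 * j) v = delta (S N) j).
    { intros j Hj. unfold v. rewrite Bmom_scal by (apply good_cs; auto).
      unfold delta. destruct (Nat.eq_dec (S N) j) as [<-|Hn].
      - fold mu. field. lra.
      - rewrite Hw0 by lia. ring. }
    exists (fun k => if le_lt_dec k N then (fun x => u k x + - c k * v x) else v).
    split.
    + intros k. destruct (le_lt_dec k N); auto. apply good_plus; auto. apply good_scal; auto.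
    + intros k j Hk Hj. destruct (le_lt_dec k N) as [Hk'|Hk'].
      * rewrite Bmom_plus by (apply good_cs; auto; apply good_scal; auto).
        rewrite Bmom_scal by (apply good_cs; auto).
        rewrite Hmv by auto.
        destruct (le_lt_dec j N) as [Hj'|Hj'].
        -- rewrite Hdual by auto. unfold delta at 2. destruct (Nat.eq_dec (S N) j); [lia|ring].
        -- assert (j = S N) by lia. subst j. unfold delta.
           destruct (Nat.eq_dec (S N) (S N)); [|lia]. destruct (Nat.eq_dec k (S N)); [lia|].
           unfold c. ring.
      * assert (k = S N) by lia. subst k. apply Hmv; auto.
Qed.


Lemma even_pow_pos x n : x <> 0 -> 0 < x ^ (2 * n).
Proof.
  intros H. rewrite pow_mult. apply pow_lt.
  destruct (pow2_ge_0 x) as [|H0]; auto. exfalso; apply (pow_nonzero x 2); auto.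
Qed.

Lemma int0inf_zero : int0inf (fun _ => 0) = 0.
Proof.
  rewrite (int0inf_unique _ (RInt (fun _ => 0) 1 2)).
  - apply RInt_zero_ext; auto; lra.
  - apply cs_gen; try lra; auto. intros; apply continuous_const.
Qed.

Lemma bsurf_pos_aux n : 0 < bsurf (S n) /\ 0 < bsurf (S (S n)).
Proof.
  induction n as [|n IH].
  - simpl. split; [lra|]. pose proof PI_RGT_0. lra.
  - destruct IH as [H1 H2]. split; auto.
    change (bsurf (S (S (S n)))) with (2 * PI / INR (S n) * bsurf (S n)).
    pose proof PI_RGT_0. assert (0 < INR (S n)) by (apply lt_0_INR; lia).
    apply Rmult_lt_0_compat; auto. apply Rdiv_lt_0_compat; lra.
Qed.

Lemma bsurf_pos d : (1 <= d)%nat -> 0 < bsurf d.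
Proof. intros H. destruct d; [lia|]. apply bsurf_pos_aux. Qed.

Lemma cs_sq f : cs f -> cs (fun x => f x ^ 2).
Proof.
  intros Hf. apply (cs_ext (fun x => f x * f x)); [intros; ring|].
  apply cs_mult; auto. apply cs_cont; auto.
Qed.

Theorem proposition1 (d q : nat) (hd : (1 <= d)%nat) (hq : (2 <= q)%nat)
  (hqe : Nat.Even q) :
  ~ exists G : R -> R,
      admissible d q G /\
      forall H : R -> R, admissible d q H -> objective d q G <= objective d q H.
Proof.
  intros [G [HG Hmin]].
  assert (Hm : 0 < objective d q G).
  { unfold objective. pose proof HG as HG'. destruct HG' as (_ & _ & _ & _ & _ & HBq).
    apply Rmult_lt_0_compat; apply even_pow_pos; auto.
    apply (V1_nonzero d q G hqe HG). }
  set (m := objective d q G) in *.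
  destruct hqe as [N HN].
  assert (HN1 : (1 <= N)%nat) by lia.
  destruct (dual d N) as [u [Hgood Hdual]].
  set (bd := bsurf d).
  assert (Hbd : 0 < bd) by (apply bsurf_pos; auto).
  set (U := fun x => / bd * u 0%nat x).
  set (V := u N).
  assert (HU : good U) by (apply good_scal; auto).
  assert (HV : good V) by (unfold V; auto).
  set (Hs := fun s x => U x + s * V x).
  assert (HHs : forall s, good (Hs s)) by (intros; apply good_plus; auto; apply good_scal; auto).
  assert (Hmom : forall s j, (j <= N)%nat -> Bmom d (2 * j) (Hs s) = / bd * delta 0 j + s * delta N j).
  { intros s j Hj. unfold Hs. rewrite Bmom_plus by (apply good_cs; auto; apply good_scal; auto).
    rewrite Bmom_scal by (apply good_cs; auto). unfold U. rewrite Bmom_scal by (apply good_cs; auto).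
    unfold V. rewrite !Hdual by lia. reflexivity. }
  assert (Hadm : forall s, s <> 0 -> admissible d q (Hs s)).
  { intros s Hs0. destruct (HHs s) as (Hd1 & Hd2 & Hd3).
    split; [|split; [|split; [|split; [|split]]]].
    - intros x _. auto.
    - intros i _ _. apply cs_ex. apply cs_pow. auto.
    - apply cs_ex. apply cs_pow. apply cs_sq. auto.
    - change (Bmom d (2 * 0) (Hs s) = / bd). rewrite Hmom by lia.
      unfold delta. destruct (Nat.eq_dec 0 0); [|lia]. destruct (Nat.eq_dec N 0); [lia|]. ring.
    - intros i Hi [j Hj]. subst i. rewrite Hmom by lia.
      unfold delta. destruct (Nat.eq_dec 0 j); [lia|]. destruct (Nat.eq_dec N j); [lia|]. ring.
    - rewrite HN. rewrite Hmom by lia.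
      unfold delta. destruct (Nat.eq_dec 0 N); [lia|]. destruct (Nat.eq_dec N N); [|lia].
      replace (/ bd * 0 + s * 1) with s by ring. auto. }
  set (K := int0inf (fun x => x ^ (d - 1) * (2 * Derive U x ^ 2 + 2 * Derive V x ^ 2))).
  assert (HVb : forall s, -1 <= s <= 1 -> 0 <= V1 d (Hs s) <= K).
  { intros s Hs1. destruct (HHs s) as (Hd1 & Hd2 & Hd3).
    assert (Hc1 : cs (fun x => x ^ (d - 1) * Derive (Hs s) x ^ 2)) by (apply cs_pow, cs_sq; auto).
    split.
    - rewrite <- int0inf_zero. unfold V1. apply int0inf_le; auto. apply cs_zero.
      intros x Hx. apply Rmult_le_pos; [apply pow_le; lra| apply pow2_ge_0].
    - unfold V1, K. apply int0inf_le; auto.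
      + apply cs_pow. apply cs_plus; apply cs_scal, cs_sq; [apply HU | apply HV].
      + intros x Hx. apply Rmult_le_compat_l; [apply pow_le; lra|].
        assert (E : Derive (Hs s) x = Derive U x + s * Derive V x).
        { unfold Hs. rewrite (Derive_plus U (fun x => s * V x)).
          - rewrite Derive_scal. reflexivity.
          - apply HU.
          - apply ex_derive_scal. apply HV. }
        rewrite E. set (a := Derive U x). set (b := Derive V x).
        assert (s ^ 2 <= 1) by nra.
        assert (0 <= b ^ 2) by apply pow2_ge_0.
        assert ((a + s * b) ^ 2 <= 2 * a ^ 2 + 2 * (s ^ 2 * b ^ 2)).
        { assert (0 <= (a - s * b) ^ 2) by apply pow2_ge_0. nra. }
        nra. }
  set (M := K ^ (2 * q) + 1).
  assert (HVK := HVb 0 ltac:(lra)).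
  assert (HK : 0 <= K) by lra.
  assert (HM : 0 < M) by (unfold M; assert (0 <= K ^ (2 * q)) by (apply pow_le; auto); lra).
  set (s := Rmin (1 / 2) (m / (2 * M))).
  assert (Hs1 : 0 < s) by (apply Rmin_glb_lt; [lra| apply Rdiv_lt_0_compat; lra]).
  assert (Hs2 : s <= 1 / 2) by apply Rmin_l.
  assert (Hs3 : s <= m / (2 * M)) by apply Rmin_r.
  assert (Hobj : objective d q (Hs s) < m).
  { unfold objective.
    assert (HB : Bmom d q (Hs s) = s).
    { rewrite HN. rewrite Hmom by lia.
      unfold delta. destruct (Nat.eq_dec 0 N); [lia|]. destruct (Nat.eq_dec N N); [|lia]. ring. }
    rewrite HB.
    destruct (HVb s ltac:(lra)) as [HV0 HV1].
    assert (P1 : V1 d (Hs s) ^ (2 * q) <= K ^ (2 * q)) by (apply pow_incr; auto).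
    assert (P2 : s ^ (2 * (d + 2)) <= s ^ 2).
    { replace (2 * (d + 2))%nat with (2 + (2 * d + 2))%nat by lia. rewrite pow_add.
      assert (s ^ (2 * d + 2) <= 1) by (rewrite <- (pow1 (2 * d + 2)); apply pow_incr; lra).
      assert (0 <= s ^ 2) by apply pow2_ge_0. nra. }
    assert (P3 : 0 <= V1 d (Hs s) ^ (2 * q)) by (apply pow_le; auto).
    assert (P4 : 0 <= s ^ (2 * (d + 2))) by (apply pow_le; lra).
    assert (P5 : K ^ (2 * q) <= M) by (unfold M; lra).
    assert (P6 : s * M <= m / 2).
    { apply Rle_trans with (m / (2 * M) * M). apply Rmult_le_compat_r; lra.
      right. field. lra. }
    apply Rle_lt_trans with (s ^ 2 * M).
    - apply Rle_trans with (s ^ 2 * K ^ (2 * q)).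
      + apply Rle_trans with (s ^ (2 * (d + 2)) * K ^ (2 * q)).
        * apply Rmult_le_compat_l; auto.
        * apply Rmult_le_compat_r; auto. apply pow_le; auto.
      + apply Rmult_le_compat_l; auto. apply pow2_ge_0.
    - replace (s ^ 2 * M) with (s * (s * M)) by ring. nra. }
  assert (Hle := Hmin (Hs s) (Hadm s ltac:(lra))).
  fold m in Hle. lra.
Qed.
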